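(* Consider Funding Games with $n$ players and $m$ items under the Highest Ratio Greedy (HRG) mechanism. Let $\mathbf{v}=(v_1,\dots,v_n)$ and $\mathbf{w}=(w_1,\dots,w_n)$ be any two valuation profiles, let $OPT^{\mathbf{v}}=(o_1,\dots,o_n)$ be an allocation maximizing $\sum_i v_i(X_i)$ over all allocations with $\sum_i X_i\le m$, and let $O(\mathbf{v})$ be the strategy profile in which each player $i$ makes the request $o_i^{req}=(o_i, v_i(o_i))$. Then for every strategy profile $\mathbf{s}$ that is valid with respect to both $\mathbf{v}$ and $\mathbf{w}$, $$\sum_{i=1}^n u_i(v_i; o_i^{req}, \mathbf{s}_{-i}) \;\ge\; sw(\mathbf{v}; O(\mathbf{v})) - sw(\mathbf{w}; \mathbf{s}),$$ i.e. the Funding Game is $(1,1)$-smooth with respect to the choice function $O$ and the social welfare objective.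
   Context: A (single-round) Funding Game has players $1,\dots,n$, $m$ identical items, and for each player $i$ a valuation function $v_i:\{0,\dots,m\}\to\mathbb{R}_{\ge 0}$ with $v_i(0)=0$, nondecreasing, and with diminishing marginal returns: $v_i(x)-v_i(x-1)\ge v_i(x+1)-v_i(x)$. A strategy (request) of player $i$ is a pair $(x_i,\tilde v_i)$ with $x_i\in\{0,\dots,m\}$ and reported value $\tilde v_i\ge 0$; it is valid with respect to $v_i$ if $\tilde v_i\le v_i(x_i)$. A strategy profile $\mathbf{s}$ is valid with respect to a valuation profile if every request is valid for the corresponding valuation. The HRG mechanism considers requests in descending order of the ratio $\tilde v_i/x_i$, breaking ties in favor of the player with lower index, and grants to each request in turn $\min(x_i, \text{number of items still available})$ items (requests with $x_i=0$ receive nothing); $X_i(\mathbf{s})$ denotes the number of items player $i$ receives. The payoff is $u_i(v_i;\mathbf{s})=v_i(X_i(\mathbf{s}))$, and for a valuation profile $\mathbf{w}$, $sw(\mathbf{w};\mathbf{s})=\sum_i w_i(X_i(\mathbf{s}))$. $(s_i',\mathbf{s}_{-i})$ denotes $\mathbf{s}$ with player $i$'s strategy replaced by $s_i'$. *)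

(* Defs.v *)
From HB Require Import structures.
From mathcomp Require Import all_boot all_order all_algebra.
Set Implicit Arguments. Unset Strict Implicit. Unset Printing Implicit Defensive.
Import Order.TTheory GRing.Theory Num.Theory.
Local Open Scope ring_scope.

(* A valuation on {0..m}: v 0 = 0, nondecreasing, diminishing marginal returns.
   Values outside {0..m} are irrelevant. *)
Definition valuation (R : realFieldType) (m : nat) (v : nat -> R) : Prop :=
  [/\ v 0%N = 0,
      (forall x, (x < m)%N -> v x <= v x.+1) &
      (forall x, (0 < x)%N -> (x < m)%N -> v x.+1 - v x <= v x - v x.-1)].

(* A strategy (request) is a pair (x_i, reported value). *)
Definition strategy (R : realFieldType) := (nat * R)%type.

Definition valid_req (R : realFieldType) (m : nat) (v : nat -> R)
  (r : strategy R) : Prop :=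
  [/\ (r.1 <= m)%N, 0 <= r.2 & r.2 <= v r.1].

Definition valid_profile (R : realFieldType) (n m : nat)
  (v : 'I_n -> nat -> R) (s : 'I_n -> strategy R) : Prop :=
  forall i, valid_req m (v i) (s i).

(* ratio vtilde / x (x = 0 gives 0; such requests receive nothing anyway) *)
Definition ratio (R : realFieldType) (r : strategy R) : R := r.2 / (r.1)%:R.

Definition hrg_before (R : realFieldType) (n : nat) (s : 'I_n -> strategy R)
  (i j : 'I_n) : bool :=
  (ratio (s j) < ratio (s i)) || ((ratio (s i) == ratio (s j)) && (i <= j)%N).

Definition hrg_order (R : realFieldType) (n : nat) (s : 'I_n -> strategy R)
  : seq 'I_n := sort (hrg_before s) (enum 'I_n).

Fixpoint hrg_grant (R : realFieldType) (n : nat) (s : 'I_n -> strategy R)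
  (rem : nat) (ord : seq 'I_n) : seq ('I_n * nat) :=
  match ord with
  | [::] => [::]
  | i :: ord' =>
      let g := minn (s i).1 rem in (i, g) :: hrg_grant s (rem - g) ord'
  end.

Definition hrg_alloc (R : realFieldType) (n m : nat) (s : 'I_n -> strategy R)
  (i : 'I_n) : nat :=
  \sum_(p <- hrg_grant s m (hrg_order s) | p.1 == i) p.2.

Definition social_welfare (R : realFieldType) (n m : nat)
  (w : 'I_n -> nat -> R) (s : 'I_n -> strategy R) : R :=
  \sum_(i < n) w i (hrg_alloc m s i).

Definition replace_strat (R : realFieldType) (n : nat) (s : 'I_n -> strategy R)
  (i : 'I_n) (si : strategy R) : 'I_n -> strategy R :=
  fun j => if j == i then si else s j.

Definition is_opt_alloc (R : realFieldType) (n m : nat)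
  (v : 'I_n -> nat -> R) (o : 'I_n -> nat) : Prop :=
  (\sum_(i < n) o i <= m)%N /\
  forall a : 'I_n -> nat, (\sum_(i < n) a i <= m)%N ->
    \sum_(i < n) v i (a i) <= \sum_(i < n) v i (o i).

Definition opt_profile (R : realFieldType) (n : nat)
  (v : 'I_n -> nat -> R) (o : 'I_n -> nat) : 'I_n -> strategy R :=
  fun i => (o i, v i (o i)).

(* Main.v *)
Require Import Defs.
From HB Require Import structures.
From mathcomp Require Import all_boot all_order all_algebra.
From mathcomp Require Import zify ring lra.
Set Implicit Arguments. Unset Strict Implicit. Unset Printing Implicit Defensive.
Import Order.TTheory GRing.Theory Num.Theory.
Local Open Scope ring_scope.

Section HRG.
Variables (R : realFieldType) (n : nat) (s : 'I_n -> strategy R).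

Lemma grant_notin (i : 'I_n) ord rem : i \notin ord ->
  (\sum_(e <- hrg_grant s rem ord | e.1 == i) e.2 = 0)%N.
Proof.
elim: ord rem => [|a t IH] rem /=; first by rewrite big_nil.
rewrite in_cons negb_or => /andP[ai nt].
by rewrite big_cons /= eq_sym (negbTE ai) IH.
Qed.

Lemma grant_split (i : 'I_n) p q rem : i \notin p -> i \notin q ->
  (\sum_(e <- hrg_grant s rem (p ++ i :: q) | e.1 == i) e.2 =
   minn (s i).1 (rem - minn rem (\sum_(j <- p) (s j).1)))%N.
Proof.
move=> ip iq; elim: p rem ip => [|a p IH] rem /=.
  by move=> _; rewrite big_cons /= eqxx grant_notin // big_nil; lia.
rewrite in_cons negb_or => /andP[ai ip].
have ai' : (a == i) = false by apply/negbTE; rewrite eq_sym.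
rewrite big_cons /= ai' IH // big_cons; congr minn; move: (\sum_(j <- p) _) ((s a).1) => S x; lia.
Qed.

Fixpoint closedP (P : pred 'I_n) (ord : seq 'I_n) : bool :=
  match ord with
  | [::] => true
  | x :: t => if P x then closedP P t else all (predC P) t
  end.

Lemma grant_closed (P : pred 'I_n) ord rem : closedP P ord ->
  (minn rem (\sum_(j <- ord | P j) (s j).1) <=
   \sum_(e <- hrg_grant s rem ord | P e.1) e.2)%N.
Proof.
elim: ord rem => [|a t IH] rem /=; first by rewrite !big_nil minn0.
rewrite !big_cons /=; case: (P a) => [cl|].
  have := IH (rem - minn (s a).1 rem)%N cl.
  move: (\sum_(j <- t | P j) (s j).1) => S.
  move: (\sum_(e <- hrg_grant s _ t | P e.1) e.2) => T; lia.
move=> al; rewrite big1_seq ?minn0 // => j /andP[Pj jt].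
by have := allP al j jt; rewrite /= Pj.
Qed.

Lemma pairwise_closed (r : rel 'I_n) (P : pred 'I_n) ord :
  (forall a b, r a b -> P b -> P a) -> pairwise r ord -> closedP P ord.
Proof.
move=> H; elim: ord => [|a t IH] //= /andP[ha ht].
case Pa: (P a); first exact: IH.
apply/allP => y yt /=; apply/negP => Py.
by have := H a y (allP ha y yt) Py; rewrite Pa.
Qed.

Lemma sum_alloc_pred (P : pred 'I_n) (G : seq ('I_n * nat)) :
  (\sum_(j | P j) \sum_(e <- G | e.1 == j) e.2 = \sum_(e <- G | P e.1) e.2)%N.
Proof.
under eq_bigr do rewrite big_mkcond /=.
rewrite exchange_big /= [RHS]big_mkcond /=; apply: eq_bigr => e _.
rewrite -big_mkcondr; case Pe: (P e.1).
  rewrite (big_pred1 e.1) // => j /=; case: (boolP (j == e.1)) => [/eqP->|nj].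
    by rewrite eqxx Pe.
  by rewrite eq_sym (negbTE nj) andbF.
rewrite big_pred0 // => j; case: (boolP (j == e.1)) => [/eqP->|nj].
  by rewrite Pe.
by rewrite eq_sym (negbTE nj) andbF.
Qed.

End HRG.

Section HRG2.
Variables (R : realFieldType) (n m : nat) (t : 'I_n -> strategy R).

Lemma hb_trans : transitive (hrg_before t).
Proof.
move=> b a c; rewrite /hrg_before.
move=> /orP[h1|/andP[/eqP e1 l1]] /orP[h2|/andP[/eqP e2 l2]]; apply/orP.
- by left; exact: lt_trans h2 h1.
- by left; rewrite -e2.
- by left; rewrite e1.
- by right; rewrite e1 e2 eqxx (leq_trans l1 l2).
Qed.

Lemma hb_total : total (hrg_before t).
Proof.
move=> a b; rewrite /hrg_before.
case: (ltgtP (Defs.ratio (t a)) (Defs.ratio (t b))) => h //=.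
exact: leq_total.
Qed.

Lemma hb_ratio a b : hrg_before t a b -> Defs.ratio (t b) <= Defs.ratio (t a).
Proof.
by rewrite /hrg_before => /orP[/ltW //|/andP[/eqP -> _]].
Qed.

Lemma ord_perm : perm_eq (hrg_order t) (enum 'I_n).
Proof. by rewrite /hrg_order perm_sort perm_refl. Qed.

Lemma ord_uniq : uniq (hrg_order t).
Proof. by rewrite /hrg_order sort_uniq enum_uniq. Qed.

Lemma ord_pairwise : pairwise (hrg_before t) (hrg_order t).
Proof. by rewrite -sorted_pairwise; [rewrite /hrg_order; exact: (sort_sorted hb_total) | exact: hb_trans]. Qed.

Lemma alloc_formula i : exists p : seq 'I_n,
  [/\ (forall j, j \in p -> hrg_before t j i), uniq (i :: p) &
   hrg_alloc m t i = minn (t i).1 (m - minn m (\sum_(j <- p) (t j).1))%N].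
Proof.
have iin : i \in hrg_order t by rewrite /hrg_order mem_sort mem_enum.
have U := ord_uniq; have PW := ord_pairwise.
rewrite /hrg_alloc; move: U PW; case/splitPr: iin => p q U PW.
move: U; rewrite cat_uniq /= => /and3P[Up /norP[ip _] /andP[iq _]].
move: PW; rewrite pairwise_cat => /and3P[AR _ _].
exists p; split.
- move=> j jp; have := allrelP AR j i jp; apply; by rewrite mem_head.
- by rewrite /= ip Up.
- exact: grant_split.
Qed.

Lemma alloc_le i : (hrg_alloc m t i <= (t i).1)%N.
Proof. by have [p [_ _ ->]] := alloc_formula i; apply: geq_minl. Qed.

Lemma alloc_prefix (P : pred 'I_n) :
  (forall a b, hrg_before t a b -> P b -> P a) ->
  (minn m (\sum_(j | P j) (t j).1) <= \sum_(j | P j) hrg_alloc m t j)%N.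
Proof.
move=> HP; rewrite /hrg_alloc sum_alloc_pred.
have := grant_closed t m (pairwise_closed HP ord_pairwise).
by rewrite (perm_big _ ord_perm) big_enum_cond.
Qed.

End HRG2.

Section Conc.
Variables (R : realFieldType) (m : nat) (v : nat -> R) (hv : valuation m v).

Lemma val_ge0 x : (x <= m)%N -> 0 <= v x.
Proof.
case: hv => v0 vinc _; elim: x => [|x IH] hx; first by rewrite v0.
apply: le_trans (IH (ltnW hx)) (vinc _ hx).
Qed.

Lemma val_marg x : (x < m)%N -> x%:R * (v x.+1 - v x) <= v x.
Proof.
case: hv => v0 vinc vdec; elim: x => [|x IH] hx; first by rewrite mul0r v0.
have h1 := IH (ltnW hx).
have h2 := vdec x.+1 isT hx; rewrite /= in h2.
have h3 : (x.+1)%:R * (v x.+2 - v x.+1) <= (x.+1)%:R * (v x.+1 - v x).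
  by rewrite ler_wpM2l.
apply: le_trans h3 _.
have -> : (x.+1)%:R = x%:R + 1 :> R by rewrite -addn1 natrD.
rewrite mulrDl mul1r; lra.
Qed.

Lemma val_conc x y : (x <= y)%N -> (y <= m)%N -> x%:R * v y <= y%:R * v x.
Proof.
case: (hv) => v0 vinc vdec.
elim: y => [|y IH] hxy hy.
  by case: x hxy => [|x] //= _; rewrite v0 mulr0 mul0r.
case: (ltngtP x y.+1) hxy => // [hxy' _|-> _]; last by [].
have IH' := IH hxy' (ltnW hy).
have hm := val_marg hy.
case: y hxy' hy IH IH' hm => [|y] hxy' hy IH IH' hm.
  by case: x hxy' IH IH' hm => [|x] //= *; rewrite v0 !mul0r mulr0.
set Y := (y.+1)%:R : R; set X := x%:R : R.
have Y0 : 0 < Y by rewrite /Y ltr0Sn.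
have X0 : 0 <= X by rewrite /X ler0n.
have key : X * (v y.+2 - v y.+1) <= v x.
  rewrite -(ler_pM2l Y0).
  apply: le_trans (IH').
  have : X * (Y * (v y.+2 - v y.+1)) <= X * v y.+1 by rewrite ler_wpM2l.
  by rewrite mulrA (mulrC X Y) -mulrA.
have -> : (y.+2)%:R = Y + 1 :> R by rewrite /Y -addn1 natrD.
have -> : X * v y.+2 = X * v y.+1 + X * (v y.+2 - v y.+1) by ring.
lra.
Qed.

End Conc.

Section Layer.
Variables (R : realFieldType) (n : nat).

Lemma layer (d g : 'I_n -> R) : (forall i, 0 <= d i) -> (forall j, 0 <= g j) ->
  forall (I : {set 'I_n}) (r rho : 'I_n -> R),
  (forall i, i \in I -> 0 <= r i) ->
  (forall i, i \in I -> \sum_(i' in I | r i <= r i') d i' <= \sum_(j | r i <= rho j) g j) ->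
  \sum_(i in I) d i * r i <= \sum_(j | 0 <= rho j) g j * rho j.
Proof.
move=> hd hg I; move: {2}#|I| (leqnn #|I|) => N.
elim: N I => [|N IH] I hN r rho hr hc.
  move: hN; rewrite leqn0 cards_eq0 => /eqP ->; rewrite big_set0.
  by apply: sumr_ge0 => j hj; rewrite mulr_ge0.
case: (set_0Vmem I) => [->|[i0 i0I]].
  by rewrite big_set0; apply: sumr_ge0 => j hj; rewrite mulr_ge0.
case: (@arg_minP _ _ _ i0 (mem I) r i0I) => k kI0 kmin.
have kI : k \in I := kI0.
have rk0 := hr k kI.
pose r' i := r i - r k; pose rho' j := rho j - r k.
have hN' : (#|I :\ k| <= N)%N by move: hN; rewrite (cardsD1 k I) kI add1n ltnS.
have IH' := IH (I :\ k) hN' r' rho'.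
have step : \sum_(i in I :\ k) d i * r' i <= \sum_(j | 0 <= rho' j) g j * rho' j.
  apply: IH'.
    by move=> i; rewrite in_setD1 => /andP[_ iI]; rewrite /r' subr_ge0 kmin.
  move=> i; rewrite in_setD1 => /andP[_ iI].
  under eq_bigl do rewrite /r' lerD2r.
  under [X in _ <= X]eq_bigl do rewrite /r' /rho' lerD2r.
  apply: le_trans (hc i iI).
  rewrite [X in X <= _]big_mkcond [X in _ <= X]big_mkcond /=.
  apply: ler_sum => j _; rewrite in_setD1.
  by case: (j \in I); case: (j != k); case: (r i <= r j); rewrite /= ?lexx ?hd.
have e1 : \sum_(i in I) d i * r i
    = (\sum_(i in I) d i) * r k + \sum_(i in I :\ k) d i * r' i.
  rewrite mulr_suml (big_setD1 k kI) [in RHS](big_setD1 k kI) /=.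
  rewrite -addrA -big_split /=; congr (_ + _).
  by apply: eq_bigr => i _; rewrite /r'; ring.
have hk : \sum_(i in I) d i <= \sum_(j | r k <= rho j) g j.
  have E : \sum_(i in I) d i = \sum_(i in I | r k <= r i) d i.
    apply: eq_bigl => i /=; case iI: (i \in I) => //=.
    by rewrite kmin.
  by rewrite E; exact: hc k kI.
have step' : \sum_(i in I :\ k) d i * r' i <= \sum_(j | r k <= rho j) g j * (rho j - r k).
  by move: step; under [X in _ <= X -> _]eq_bigl do rewrite /rho' subr_ge0.
rewrite e1.
apply: le_trans (_ : (\sum_(j | r k <= rho j) g j) * r k + \sum_(j | r k <= rho j) g j * (rho j - r k) <= _).
  by apply: lerD => //; rewrite ler_wpM2r.
rewrite mulr_suml -big_split /= big_mkcond [X in _ <= X]big_mkcond /=.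
apply: ler_sum => j _; case: ifP => hj.
  have -> : g j * r k + g j * (rho j - r k) = g j * rho j by ring.
  by rewrite (le_trans rk0 hj) lexx.
by case: ifP => // h0; rewrite mulr_ge0 // hg.
Qed.

End Layer.

Lemma sum_seq_le n (p : seq 'I_n) (F : 'I_n -> nat) : uniq p ->
  (\sum_(j <- p) F j <= \sum_j F j)%N.
Proof.
move=> up; rewrite big_uniq // [X in (_ <= X)%N](bigID (mem p)) /=.
exact: leq_addr.
Qed.

Lemma util_bound (R : realFieldType) m (v : nat -> R) (hv : valuation m v) x o :
  (x <= o)%N -> (o <= m)%N ->
  v o - ((o - x)%N)%:R * (v o / o%:R) <= v x.
Proof.
move=> hxo hom; case: o hxo hom => [|o] hxo hom.
  by move: hxo; rewrite leqn0 => /eqP ->; rewrite mul0r subr0.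
have hc := val_conc hv hxo hom.
have O0 : 0 < (o.+1)%:R :> R by rewrite ltr0Sn.
rewrite natrB //.
have -> : v o.+1 - ((o.+1)%:R - x%:R) * (v o.+1 / (o.+1)%:R)
   = x%:R * v o.+1 / (o.+1)%:R.
  by field; have h := ler0n R o; apply: lt0r_neq0; lra.
by rewrite ler_pdivrMr // (mulrC (v x)).
Qed.

Lemma grant_value (R : realFieldType) m (w : nat -> R) (hw : valuation m w)
  (r : strategy R) g : valid_req m w r -> (g <= r.1)%N ->
  g%:R * Defs.ratio r <= w g.
Proof.
case=> hx h2 h2w hg; rewrite /Defs.ratio.
case: r hx h2 h2w hg => [x a] /= hx h2 h2w hg.
case: x hx h2w hg => [|x] hx h2w hg.
  by move: hg; rewrite leqn0 => /eqP ->; rewrite mul0r (val_ge0 hw).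
have O0 : 0 < (x.+1)%:R :> R by rewrite ltr0Sn.
apply: le_trans (_ : g%:R * (w x.+1 / (x.+1)%:R) <= _).
  by rewrite ler_wpM2l // ler_pM2r // invr_gt0.
rewrite mulrA ler_pdivrMr // (mulrC (w g)).
exact: (val_conc hw hg hx).
Qed.

Theorem mainTheorem1 (R : realFieldType) (n m : nat)
  (v w : 'I_n -> nat -> R)
  (hv : forall i, valuation m (v i)) (hw : forall i, valuation m (w i))
  (o : 'I_n -> nat) (hopt : is_opt_alloc m v o)
  (s : 'I_n -> strategy R)
  (hsv : valid_profile m v s) (hsw : valid_profile m w s) :
  \sum_(i < n) v i (hrg_alloc m (replace_strat s i (o i, v i (o i))) i)
  >= social_welfare m v (opt_profile v o) - social_welfare m w s.
Proof.
case: hopt => hsum _.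
have hom i : (o i <= m)%N.
  by apply: leq_trans hsum; rewrite (bigD1 i) //= leq_addr.
pose s' i := replace_strat s i (o i, v i (o i)).
pose X' i := hrg_alloc m (s' i) i.
pose g j := hrg_alloc m s j.
pose rI i := v i (o i) / (o i)%:R.
pose d i : R := ((o i - X' i)%N)%:R.
have hX' i : (X' i <= o i)%N.
  by have := alloc_le m (s' i) i; rewrite /s' /replace_strat eqxx.
have hg j : (g j <= (s j).1)%N by exact: alloc_le.
have sw_opt : social_welfare m v (opt_profile v o) = \sum_i v i (o i).
  apply: eq_bigr => i _; congr (v i _).
  have [p [_ up ->]] := alloc_formula m (opt_profile v o) i.
  have := sum_seq_le o up; rewrite big_cons /= => h.
  have hS := leq_trans h hsum.
  move: (\sum_(j <- p) o j) hS => S hS.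
  have {}hS : (o i + (S : nat) <= m)%N by [].
  clear -hS; lia.
have hu i : v i (o i) - d i * rI i <= v i (X' i) by exact: util_bound.
have key i : (X' i < o i)%N ->
    \sum_i' d i' <= \sum_(j | rI i <= Defs.ratio (s j)) (g j)%:R.
  move=> hlt.
  have h1 : (\sum_i' (o i' - X' i') <= m - X' i)%N.
    rewrite (bigD1 i) //= in hsum; rewrite (bigD1 i) //=.
    have : (\sum_(i' < n | i' != i) (o i' - X' i') <= \sum_(i' < n | i' != i) o i')%N.
      by apply: leq_sum => j _; exact: leq_subr.
    move: (\sum_(i' < n | i' != i) (o i' - X' i'))%N => A.
    move: (\sum_(i' < n | i' != i) o i')%N hsum => B hsum.
    have := hX' i; lia.
  have [p [hp up hX]] := alloc_formula m (s' i) i.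
  pose P := fun j => rI i <= Defs.ratio (s j).
  have hPp j : j \in p -> P j /\ j != i.
    move=> jp; move: up; rewrite /= => /andP[ip _].
    have ji : j != i by apply: contraNneq ip => <-.
    have := hb_ratio (hp j jp); rewrite /s' /replace_strat eqxx (negbTE ji).
    by [].
  have h2 : (m - X' i <= \sum_(j | P j) g j)%N.
    apply: leq_trans _ (@alloc_prefix _ _ m s P _); last first.
      move=> a b /hb_ratio hab; rewrite /P => hb; exact: le_trans hb hab.
    have hS : (\sum_(j <- p) (s' i j).1 <= \sum_(j | P j) (s j).1)%N.
      rewrite (eq_big_seq (fun j => (s j).1)); last first.
        by move=> j /hPp [_ ji]; rewrite /s' /replace_strat (negbTE ji).
      move: up => /= /andP[_ up]; rewrite big_uniq //.
      rewrite [X in (_ <= X)%N]big_mkcond [X in (X <= _)%N]big_mkcond /=.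
      apply: leq_sum => j _; case: ifP => // /hPp [Pj _].
      by rewrite Pj.
    move: hX; rewrite -/(X' i) => hX.
    move: (\sum_(j <- p) (s' i j).1)%N (\sum_(j | P j) (s j).1)%N hS hX => S T hS hX.
    have e : (s' i i).1 = o i by rewrite /s' /replace_strat eqxx.
    rewrite e in hX; have := hX' i; move: hlt; clear -hS hX; lia.
  apply: le_trans (_ : ((m - X' i)%N)%:R <= _).
    by rewrite /d -natr_sum ler_nat.
  by rewrite -natr_sum ler_nat.
pose I := [set i | (X' i < o i)%N].
have hlay : \sum_(i in I) d i * rI i
    <= \sum_(j | 0 <= Defs.ratio (s j)) (g j)%:R * Defs.ratio (s j).
  apply: (@layer R n d (fun j => (g j)%:R)).
  - by move=> i; exact: ler0n.
  - by move=> j; exact: ler0n.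
  - by move=> i _; rewrite /rI divr_ge0 ?ler0n // (val_ge0 (hv i) (hom i)).
  move=> i; rewrite inE => hlt; apply: le_trans (key i hlt).
  rewrite big_mkcond /=; apply: ler_sum => j _.
  case: ifP => _; first exact: lexx.
  exact: ler0n.
have hsumI : \sum_i d i * rI i = \sum_(i in I) d i * rI i.
  rewrite [RHS]big_mkcond /=; apply: eq_bigr => i _; rewrite inE.
  case: ifP => // /negbT; rewrite -leqNgt => hle.
  have e : (o i - X' i)%N = 0%N by apply/eqP; rewrite subn_eq0.
  by rewrite /d /= e mul0r.
have hW : \sum_(j | 0 <= Defs.ratio (s j)) (g j)%:R * Defs.ratio (s j)
    <= \sum_j w j (g j).
  rewrite big_mkcond /=; apply: ler_sum => j _; case: ifP => _.
    exact: (grant_value (hw j) (hsw j) (hg j)).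
  by case: (hsw j) => hx _ _; apply: (val_ge0 (hw j)); exact: leq_trans (hg j) hx.
rewrite sw_opt.
apply: le_trans (ler_sum _ (fun i _ => hu i)).
rewrite sumrB lerD2l lerN2 hsumI.
exact: le_trans hlay hW.
Qed.
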